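(* Let $\chi:\mathcal H\to\mathcal H_L^\chi\otimes\mathcal H_R^\chi$ be a lean splitting map and $\mathcal A=\mathrm{stloc}_L(\chi)$. Then there exist a canonical splitting map $\zeta:\mathcal H\to\mathcal H_L\otimes\mathcal H_R$ for $\mathcal A$ and isometries $U_L:\mathcal H_L\to\mathcal H_L^\chi$ and $U_R:\mathcal H_R\to\mathcal H_R^\chi$ such that $\chi=(U_L\otimes U_R)\zeta$.
   Context: All Hilbert spaces are finite-dimensional and complex. A splitting map on $\mathcal H$ is an isometry $\chi:\mathcal H\to\mathcal H_L^\chi\otimes\mathcal H_R^\chi$; $\pi^\chi=\chi\chi^\dagger$. $B\in\mathcal L(\mathcal H_L^\chi)$ is left $\chi$-consistent if $\pi^\chi(B\otimes\mathbb 1)=(B\otimes\mathbb 1)\pi^\chi$ (set $\mathrm{cons}_L(\chi)$); $A\in\mathcal L(\mathcal H)$ is strictly left $\chi$-local if there is $\tilde A\in\mathcal L(\mathcal H_L^\chi)$ with $A\chi^\dagger=\chi^\dagger(\tilde A\otimes\mathbb 1)$ and $\chi A=(\tilde A\otimes\mathbb 1)\chi$ (set $\mathrm{stloc}_L(\chi)$). Right versions $\mathrm{cons}_R(\chi)$, $\mathrm{stloc}_R(\chi)$ are defined symmetrically on $\mathcal H_R^\chi$. $\chi$ is balanced if $\mathrm{stloc}_R(\chi)=\mathrm{stloc}_L(\chi)'$, and lean if it is balanced and $\mathrm{cons}_L(\chi)'=\mathcal Z(\mathrm{cons}_L(\chi))$ (commutant and centre taken in $\mathcal L(\mathcal H_L^\chi)$)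 and $\mathrm{cons}_R(\chi)'=\mathcal Z(\mathrm{cons}_R(\chi))$ (in $\mathcal L(\mathcal H_R^\chi)$). A representation unitary for a Von Neumann algebra $\mathcal A\subseteq\mathcal L(\mathcal H)$ is a unitary $U:\mathcal H\to\bigoplus_i(\mathcal H_L^i\otimes\mathcal H_R^i)$ with $U\mathcal AU^\dagger=\bigoplus_i\mathcal L(\mathcal H_L^i)\otimes\mathbb 1_{\mathcal H_R^i}$; a canonical splitting map for $\mathcal A$ is $x\mapsto Ux$ followed by the natural inclusion into $(\bigoplus_i\mathcal H_L^i)\otimes(\bigoplus_i\mathcal H_R^i)$, for such a $U$. *)

(* Defs.v *)
(* Finite-dimensional complex Hilbert spaces are modelled as
   C^I (standard inner product) for a finite index type I, with C = R[i] the
   complex numbers over a real type R.  A linear map C^J -> C^I is a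
   function  I -> J -> C  (its matrix), composed by matrix product. *)
From HB Require Import structures.
From mathcomp Require Import all_boot all_algebra.
From mathcomp Require Import reals complex.
Set Implicit Arguments. Unset Strict Implicit. Unset Printing Implicit Defensive.
Import GRing.Theory Num.Theory.
Local Open Scope ring_scope.

Section Ops.
Variable R : realType.
Notation C := (R[i]).

Definition op (I J : finType) := I -> J -> C.

Definition opmul (I J K : finType) (A : op I J) (B : op J K) : op I K :=
  fun i k => \sum_(j : J) A i j * B j k.

Definition opadj (I J : finType) (A : op I J) : op J I :=
  fun j i => (A i j)^*.

Definition opid (I : finType) : op I I := fun i j => (i == j)%:R.

(* tensor product of linear maps, C^(I*K) = C^I (x) C^K *)
Definition optens (I J K L : finType) (A : op I J) (B : op K L) : op (I * K)%type (J * L)%type :=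
  fun p q => A p.1 q.1 * B p.2 q.2.

Definition is_isometry (I J : finType) (V : op I J) : Prop :=
  opmul (opadj V) V = @opid J.

Definition is_unitary (I J : finType) (V : op I J) : Prop :=
  opmul (opadj V) V = @opid J /\ opmul V (opadj V) = @opid I.

Definition opset (I : finType) := op I I -> Prop.

Definition commutant (I : finType) (S : opset I) : opset I :=
  fun B => forall A, S A -> opmul A B = opmul B A.

Definition centre (I : finType) (S : opset I) : opset I :=
  fun B => S B /\ commutant S B.

Definition seteq (I : finType) (S T : opset I) : Prop := forall A, S A <-> T A.

Section Splitting.
Variables (IH IL IR : finType).

Definition splitting_map (chi : op (IL * IR)%type IH) : Prop := is_isometry chi.

Definition proj_chi (chi : op (IL * IR)%type IH) : op (IL * IR)%type (IL * IR)%type :=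
  opmul chi (opadj chi).

Definition consL (chi : op (IL * IR)%type IH) : opset IL :=
  fun B => opmul (proj_chi chi) (optens B (@opid IR))
           = opmul (optens B (@opid IR)) (proj_chi chi).

Definition consR (chi : op (IL * IR)%type IH) : opset IR :=
  fun B => opmul (proj_chi chi) (optens (@opid IL) B)
           = opmul (optens (@opid IL) B) (proj_chi chi).

Definition stlocL (chi : op (IL * IR)%type IH) : opset IH :=
  fun A => exists At : op IL IL,
    opmul A (opadj chi) = opmul (opadj chi) (optens At (@opid IR)) /\
    opmul chi A = opmul (optens At (@opid IR)) chi.

Definition stlocR (chi : op (IL * IR)%type IH) : opset IH :=
  fun A => exists At : op IR IR,
    opmul A (opadj chi) = opmul (opadj chi) (optens (@opid IL) At) /\
    opmul chi A = opmul (optens (@opid IL) At) chi.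

Definition balanced (chi : op (IL * IR)%type IH) : Prop :=
  seteq (stlocR chi) (commutant (stlocL chi)).

Definition lean (chi : op (IL * IR)%type IH) : Prop :=
  [/\ balanced chi,
      seteq (commutant (consL chi)) (centre (consL chi)) &
      seteq (commutant (consR chi)) (centre (consR chi))].
End Splitting.

(* A family of pairs (H_L^k, H_R^k), k : K, is encoded by
   finite index types JL, JR with labellings fL : JL -> K, fR : JR -> K:
   H_L^k = C^{fL^-1 k},  (+)_k H_L^k = C^JL, and likewise for R.  Then
   (+)_k (H_L^k (x) H_R^k) = C^(blk fL fR), where blk fL fR is the set of
   pairs (jl, jr) with fL jl = fR jr; its natural inclusion into
   ((+)_k H_L^k) (x) ((+)_k H_R^k) = C^(JL * JR)%type is the map [incl]. *)
Section DirectSum.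
Variables (K JL JR : finType) (fL : JL -> K) (fR : JR -> K).

Definition blk_pred : pred (JL * JR)%type := fun p => fL p.1 == fR p.2.
Definition blk : finType := {p : JL * JR | blk_pred p}.

Definition incl : op (JL * JR)%type blk := fun p b => (p == val b)%:R.

Definition nondeg_blocks : Prop :=
  forall k : K, (exists jl, fL jl = k) /\ (exists jr, fR jr = k).

Definition blockdiagL (X : op JL JL) : Prop :=
  forall j j', fL j != fL j' -> X j j' = 0.

(* (+)_k (X_k (x) 1_{H_R^k})  as an operator on C^blk *)
Definition blk_tens_id (X : op JL JL) : op blk blk :=
  fun b b' => X (val b).1 (val b').1 * ((val b).2 == (val b').2)%:R.

(* (+)_k L(H_L^k) (x) 1_{H_R^k} *)
Definition blk_algebra : opset blk :=
  fun Y => exists X, blockdiagL X /\ Y = blk_tens_id X.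

Definition representation_unitary (IH : finType) (A : opset IH) (U : op blk IH) : Prop :=
  nondeg_blocks /\ is_unitary U /\
  seteq (fun Y => exists a, A a /\ Y = opmul (opmul U a) (opadj U)) blk_algebra.
End DirectSum.

Definition canonical_splitting_map (IH JL JR : finType) (A : opset IH)
    (zeta : op (JL * JR)%type IH) : Prop :=
  exists (K : finType) (fL : JL -> K) (fR : JR -> K) (U : op (blk fL fR) IH),
    representation_unitary A U /\ zeta = opmul (incl (fL:=fL) (fR:=fR)) U.
End Ops.

(* Main.v *)
Require Import Defs.
From HB Require Import structures.
From mathcomp Require Import all_boot all_algebra.
From mathcomp Require Import reals complex.
From mathcomp Require Import spectral.
Set Implicit Arguments. Unset Strict Implicit. Unset Printing Implicit Defensive.
Import GRing.Theory Num.Theory.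
Local Open Scope ring_scope.
Local Open Scope sesquilinear_scope.

Section Basic.
Variable R : realType.
Local Notation C := (R[i]).

Lemma opext (I J : finType) (A B : op R I J) : (forall i j, A i j = B i j) -> A = B.
Proof. move=> h; apply: boolp.funext => i; apply: boolp.funext => j; exact: h. Qed.

Lemma opmulA (I J K L : finType) (A : op R I J) (B : op R J K) (D : op R K L) :
  opmul (opmul A B) D = opmul A (opmul B D).
Proof.
apply: opext => i l; rewrite /opmul.
under eq_bigr do rewrite big_distrl /=.
rewrite exchange_big; apply: eq_bigr => j _; rewrite big_distrr /=.
by apply: eq_bigr => k _; rewrite mulrA.
Qed.

Lemma opmul1l (I J : finType) (A : op R I J) : opmul (@opid R I) A = A.
Proof.
apply: opext => i j; rewrite /opmul /opid (bigD1 i) //= eqxx mul1r big1 ?addr0 //.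
by move=> k /negbTE; rewrite eq_sym => ->; rewrite mul0r.
Qed.

Lemma opmul1r (I J : finType) (A : op R I J) : opmul A (@opid R J) = A.
Proof.
apply: opext => i j; rewrite /opmul /opid (bigD1 j) //= eqxx mulr1 big1 ?addr0 //.
by move=> k /negbTE ->; rewrite mulr0.
Qed.

Lemma opadjK (I J : finType) (A : op R I J) : opadj (opadj A) = A.
Proof. by apply: opext => i j; rewrite /opadj conjCK. Qed.

Lemma opadj_mul (I J K : finType) (A : op R I J) (B : op R J K) :
  opadj (opmul A B) = opmul (opadj B) (opadj A).
Proof.
apply: opext => k i; rewrite /opadj /opmul rmorph_sum /=.
by apply: eq_bigr => j _; rewrite rmorphM mulrC.
Qed.

Lemma opadj_id (I : finType) : opadj (@opid R I) = @opid R I.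
Proof. by apply: opext => i j; rewrite /opadj /opid conjC_nat eq_sym. Qed.

Lemma optens_mul (I J K L M N : finType) (A : op R I J) (B : op R K L)
   (D : op R J M) (E : op R L N) :
  opmul (optens A B) (optens D E) = optens (opmul A D) (opmul B E).
Proof.
apply: opext => p q; rewrite /opmul /optens.
rewrite [RHS]big_distrl /=.
under [RHS]eq_bigr do rewrite big_distrr /=.
rewrite pair_big /=; apply: eq_bigr => [[j l]] _ /=.
by rewrite mulrACA.
Qed.

Lemma opadj_tens (I J K L : finType) (A : op R I J) (B : op R K L) :
  opadj (optens A B) = optens (opadj A) (opadj B).
Proof. by apply: opext => p q; rewrite /opadj /optens rmorphM. Qed.

Lemma optens_id (I K : finType) : optens (@opid R I) (@opid R K) = @opid R _.
Proof.
apply: opext => [[i k] [j l]]; rewrite /optens /opid /= xpair_eqE.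
by case: (i == j); case: (k == l); rewrite ?mulr1 ?mulr0 ?mul0r.
Qed.

Lemma sum_sig (I : finType) (P : pred I) (F : I -> C) :
  \sum_(x : {x | P x}) F (val x) = \sum_(i | P i) F i.
Proof. by rewrite -(big_sub P). Qed.


Lemma mx_simdiag n (As : seq 'M[C]_n) :
  {in As &, forall A B, comm_mx A B} ->
  {in As, forall A, A ^t* \in As} ->
  exists2 P : 'M[C]_n, P \is unitarymx & {in As, forall A, is_diag_mx (P *m A *m P^t*)}.
Proof.
move=> hc hadj; have [P Pu /allP hP] := cotrigonalization hc.
exists P; first exact Pu.
move=> A hA; apply/is_diag_mxP => i j neq.
have t1 := hP A hA; have t2 := hP _ (hadj A hA).
rewrite /= /similar_to conjymx // in t1.
rewrite /= /similar_to conjymx // in t2.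
have e : P *m A ^t* *m P ^t* = (P *m A *m P ^t*) ^t*.
  by rewrite !trmx_mul !map_mxM trmxCK mulmxA.
rewrite e in t2.
case: (ltngtP i j) => [lt|lt|/val_inj eq]; last by rewrite eq eqxx in neq.
- by move/is_trig_mxP: t1 => ->.
- move/is_trig_mxP: t2 => /(_ _ _ lt); rewrite !mxE => /eqP.
  by rewrite conjC_eq0 => /eqP.
Qed.

Section Conv.
Variable I : finType.
Local Notation n := #|I|.
Definition mxo (A : op R I I) : 'M[C]_n := \matrix_(i, j) A (enum_val i) (enum_val j).
Definition opm (M : 'M[C]_n) : op R I I := fun i j => M (enum_rank i) (enum_rank j).

Lemma sum_enum (F : I -> C) : \sum_(k : I) F k = \sum_(k < n) F (enum_val k).
Proof. by rewrite (reindex (@enum_val I predT)) //; apply: onW_bij; exact: enum_val_bij. Qed.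

Lemma mxo_mul A B : mxo (opmul A B) = mxo A *m mxo B.
Proof. by apply/matrixP => i j; rewrite !mxE /opmul sum_enum; apply: eq_bigr => k _; rewrite !mxE. Qed.

Lemma mxo_adj A : mxo (opadj A) = (mxo A)^t*.
Proof. by apply/matrixP => i j; rewrite !mxE. Qed.

Lemma opm_mul M N : opm (M *m N) = opmul (opm M) (opm N).
Proof.
apply: opext => i j; rewrite /opm /opmul mxE sum_enum.
by apply: eq_bigr => k _; rewrite enum_valK.
Qed.

Lemma opm_adj M : opm (M^t*) = opadj (opm M).
Proof. by apply: opext => i j; rewrite /opm /opadj !mxE. Qed.

Lemma opm_1 : opm 1%:M = @opid R I.
Proof.
apply: opext => i j; rewrite /opm /opid mxE.
by rewrite (inj_eq (can_inj enum_rankK)).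
Qed.

Lemma opmK A : opm (mxo A) = A.
Proof. by apply: opext => i j; rewrite /opm mxE !enum_rankK. Qed.

End Conv.

Lemma simdiag (I X : finType) (F : X -> op R I I) :
  (forall x y, opmul (F x) (F y) = opmul (F y) (F x)) ->
  (forall x, exists y, opadj (F x) = F y) ->
  exists V : op R I I, Defs.is_unitary V /\
    forall x i j, i != j -> opmul (opmul (opadj V) (F x)) V i j = 0.
Proof.
move=> hc hadj.
pose As := [seq mxo (F x) | x <- enum X].
have [P Pu hP] : exists2 P : 'M[C]_#|I|, P \is unitarymx &
    {in As, forall A, is_diag_mx (P *m A *m P^t*)}.
  apply: mx_simdiag.
  - move=> _ _ /mapP[x _ ->] /mapP[y _ ->].
    by rewrite /comm_mx -!mxo_mul hc.
  - move=> _ /mapP[x _ ->]; have [y hy] := hadj x.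
    by rewrite -mxo_adj hy; apply/mapP; exists y; rewrite ?mem_enum.
exists (opm (P^t*)); split.
  rewrite /Defs.is_unitary -opm_adj trmxCK -!opm_mul (unitarymxP Pu) opm_1; split => //.
  by rewrite -[X in opm X]mul1mx mulmxA mulmxKtV // opm_1.
move=> x i j neq.
have hd := hP (mxo (F x)) (map_f _ (mem_enum _ x)).
rewrite -opm_adj trmxCK -(opmK (F x)) -!opm_mul /opm.
move/is_diag_mxP: hd => -> //.
by apply: contra neq => /eqP /val_inj /enum_rank_inj ->.
Qed.

End Basic.

Local Close Scope sesquilinear_scope.

Section Sums.
Variable R : realType.
Local Notation C := (R[i]).

Lemma sum_pair (I J : finType) (F : I * J -> C) :
  \sum_p F p = \sum_i \sum_j F (i, j).
Proof. by rewrite pair_big; apply: eq_bigr => [[i j]]. Qed.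

Lemma sum_delta (I : finType) (i : I) (f : I -> C) :
  (forall j, j != i -> f j = 0) -> \sum_j f j = f i.
Proof. by move=> h; rewrite (bigD1 i) //= big1 ?addr0 // => j /h. Qed.

Lemma sum_sig_full (I : finType) (P : pred I) (F : I -> C) :
  (forall i, ~~ P i -> F i = 0) -> \sum_(x : {x | P x}) F (val x) = \sum_i F i.
Proof.
move=> h; rewrite sum_sig big_mkcond /=; apply: eq_bigr => i _.
by case: ifP => // /negbT /h ->.
Qed.

Variables (I J : finType).

Lemma tensL_l (X : op R I I) (K : finType) (P : op R (I * J)%type K) a r q :
  opmul (optens X (@opid R J)) P (a, r) q = \sum_b X a b * P (b, r) q.
Proof.
rewrite /opmul sum_pair; apply: eq_bigr => b _ /=.
rewrite (sum_delta (i:=r)) /optens /opid /= ?eqxx ?mulr1 // => t.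
by rewrite eq_sym => /negbTE ->; rewrite mulr0 mul0r.
Qed.

Lemma tensL_r (X : op R I I) (K : finType) (P : op R K (I * J)%type) p a s :
  opmul P (optens X (@opid R J)) p (a, s) = \sum_b P p (b, s) * X b a.
Proof.
rewrite /opmul sum_pair; apply: eq_bigr => b _ /=.
rewrite (sum_delta (i:=s)) /optens /opid /= ?eqxx ?mulr1 // => t.
by move=> /negbTE ->; rewrite mulr0 mulr0.
Qed.

Lemma tensR_l (Y : op R J J) (K : finType) (P : op R (I * J)%type K) a r q :
  opmul (optens (@opid R I) Y) P (a, r) q = \sum_t Y r t * P (a, t) q.
Proof.
rewrite /opmul sum_pair (sum_delta (i:=a)) /optens /opid /=.
  by apply: eq_bigr => t _; rewrite eqxx mul1r.
move=> b nb; apply: big1 => t _.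
by rewrite eq_sym (negbTE nb) mul0r mul0r.
Qed.

Lemma tensR_r (Y : op R J J) (K : finType) (P : op R K (I * J)%type) p a s :
  opmul P (optens (@opid R I) Y) p (a, s) = \sum_t P p (a, t) * Y t s.
Proof.
rewrite /opmul sum_pair (sum_delta (i:=a)) /optens /opid /=.
  by apply: eq_bigr => t _; rewrite eqxx mul1r.
move=> b nb; apply: big1 => t _.
by rewrite (negbTE nb) mul0r mulr0.
Qed.

End Sums.

Section Pre.
Variables (R : realType) (IH IL IR : finType) (chi : op R (IL * IR)%type IH).

Lemma pi_adj : opadj (proj_chi chi) = proj_chi chi.
Proof. by rewrite /proj_chi opadj_mul opadjK. Qed.

Definition piL r s : op R IL IL := fun a a' => proj_chi chi (a, r) (a', s).
Definition piR a a' : op R IR IR := fun r s => proj_chi chi (a, r) (a', s).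

Lemma consL_comm B : consL chi B ->
  forall r s, opmul B (piL r s) = opmul (piL r s) B.
Proof.
move=> h r s; apply: opext => a a'.
have := congr1 (fun M => M (a, r) (a', s)) h; rewrite /= tensL_r tensL_l.
rewrite /opmul /piL => e; symmetry; exact: e.
Qed.

Lemma consR_comm B : consR chi B ->
  forall a a', opmul B (piR a a') = opmul (piR a a') B.
Proof.
move=> h a a'; apply: opext => r s.
have := congr1 (fun M => M (a, r) (a', s)) h; rewrite /= tensR_r tensR_l.
rewrite /opmul /piR => e; symmetry; exact: e.
Qed.

Lemma piL_adj r s : opadj (piL r s) = piL s r.
Proof. by apply: opext => a a'; rewrite /piL /opadj -[in RHS]pi_adj. Qed.

Lemma piR_adj a a' : opadj (piR a a') = piR a' a.
Proof. by apply: opext => r s; rewrite /piR /opadj -[in RHS]pi_adj. Qed.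

Lemma exists_V : lean chi -> exists V : op R IL IL, Defs.is_unitary V /\
  forall r s i j, i != j -> opmul (opmul (opadj V) (piL r s)) V i j = 0.
Proof.
case=> _ hL _.
have cm r s : commutant (consL chi) (piL r s).
  by move=> A hA; apply: consL_comm.
have h1 : forall x y : (IR * IR)%type, opmul (piL x.1 x.2) (piL y.1 y.2) = opmul (piL y.1 y.2) (piL x.1 x.2).
  move=> [r s] [r' s'] /=.
  have [hc _] := (hL _).1 (cm r s).
  by apply: cm.
have h2 : forall x : (IR * IR)%type, exists y : (IR * IR)%type, opadj (piL x.1 x.2) = piL y.1 y.2.
  by move=> [r s]; exists (s, r); rewrite /= piL_adj.
have [V [hV hd]] := simdiag h1 h2.
by exists V; split => // r s; apply: (hd (r, s)).
Qed.

Lemma exists_W : lean chi -> exists W : op R IR IR, Defs.is_unitary W /\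
  forall a a' i j, i != j -> opmul (opmul (opadj W) (piR a a')) W i j = 0.
Proof.
case=> _ _ hR.
have cm a a' : commutant (consR chi) (piR a a').
  by move=> A hA; apply: consR_comm.
have h1 : forall x y : (IL * IL)%type, opmul (piR x.1 x.2) (piR y.1 y.2) = opmul (piR y.1 y.2) (piR x.1 x.2).
  move=> [a a'] [b b'] /=.
  have [hc _] := (hR _).1 (cm a a').
  by apply: cm.
have h2 : forall x : (IL * IL)%type, exists y : (IL * IL)%type, opadj (piR x.1 x.2) = piR y.1 y.2.
  by move=> [a a']; exists (a', a); rewrite /= piR_adj.
have [W [hW hd]] := simdiag h1 h2.
by exists W; split => // a a'; apply: (hd (a, a')).
Qed.

End Pre.

Section Main.
Variables (R : realType) (IH IL IR : finType) (chi : op R (IL * IR)%type IH).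
Variables (V : op R IL IL) (W : op R IR IR).
Hypothesis hiso : is_isometry chi.
Hypothesis hV : Defs.is_unitary V.
Hypothesis hW : Defs.is_unitary W.
Hypothesis hVd : forall r s i j, i != j -> opmul (opmul (opadj V) (piL chi r s)) V i j = 0.
Hypothesis hWd : forall a a' i j, i != j -> opmul (opmul (opadj W) (piR chi a a')) W i j = 0.

Local Notation C := (R[i]).
Local Notation idL := (@opid R IL).
Local Notation idR := (@opid R IR).

Definition VW := optens V W.
Definition chit := opmul (opadj VW) chi.
Definition Pit := opmul chit (opadj chit).

Lemma VW_unit : opmul (opadj VW) VW = @opid R _ /\ opmul VW (opadj VW) = @opid R _.
Proof.
case: hV => V1 V2; case: hW => W1 W2.
by rewrite /VW opadj_tens !optens_mul V1 V2 W1 W2 !optens_id.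
Qed.

Lemma chit_iso : opmul (opadj chit) chit = @opid R _.
Proof.
rewrite /chit opadj_mul opadjK opmulA -(opmulA VW) (proj2 VW_unit) opmul1l.
exact: hiso.
Qed.

Lemma chi_eq : chi = opmul VW chit.
Proof. by rewrite /chit -opmulA (proj2 VW_unit) opmul1l. Qed.

Lemma Pit_eq2 : Pit = opmul (opmul (opadj VW) (proj_chi chi)) VW.
Proof.
by rewrite /Pit /chit /proj_chi opadj_mul opadjK !opmulA.
Qed.

Lemma Mentry (M : op R (IL * IR)%type (IL * IR)%type) a a' t u :
  opmul (opmul (optens (opadj V) idR) M) (optens V idR) (a, t) (a', u) =
  opmul (opmul (opadj V) (fun c b => M (c, t) (b, u))) V a a'.
Proof. by rewrite tensL_r; under eq_bigr do rewrite tensL_l. Qed.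

Lemma Nentry (M : op R (IL * IR)%type (IL * IR)%type) a a' t u :
  opmul (opmul (optens idL (opadj W)) M) (optens idL W) (t, a) (u, a') =
  opmul (opmul (opadj W) (fun c b => M (t, c) (u, b))) W a a'.
Proof. by rewrite tensR_r; under eq_bigr do rewrite tensR_l. Qed.

Lemma Pit_decL : Pit = opmul (opmul (optens idL (opadj W))
    (opmul (opmul (optens (opadj V) idR) (proj_chi chi)) (optens V idR))) (optens idL W).
Proof.
rewrite Pit_eq2 /VW opadj_tens.
have -> : optens (opadj V) (opadj W) = opmul (optens idL (opadj W)) (optens (opadj V) idR).
  by rewrite optens_mul opmul1l opmul1r.
have -> : optens V W = opmul (optens V idR) (optens idL W).
  by rewrite optens_mul opmul1l opmul1r.
by rewrite !opmulA.
Qed.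

Lemma Pit_decR : Pit = opmul (opmul (optens (opadj V) idR)
    (opmul (opmul (optens idL (opadj W)) (proj_chi chi)) (optens idL W))) (optens V idR).
Proof.
rewrite Pit_eq2 /VW opadj_tens.
have -> : optens (opadj V) (opadj W) = opmul (optens (opadj V) idR) (optens idL (opadj W)).
  by rewrite optens_mul opmul1l opmul1r.
have -> : optens V W = opmul (optens idL W) (optens V idR).
  by rewrite optens_mul opmul1l opmul1r.
by rewrite !opmulA.
Qed.

Lemma Pit_diagL a a' r s : a != a' -> Pit (a, r) (a', s) = 0.
Proof.
move=> neq; rewrite Pit_decL tensR_r big1 // => u _.
rewrite tensR_l big1 ?mul0r // => t _.
by rewrite Mentry hVd ?mulr0.
Qed.

Lemma Pit_diagR a a' r s : r != s -> Pit (a, r) (a', s) = 0.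
Proof.
move=> neq; rewrite Pit_decR tensL_r big1 // => u _.
rewrite tensL_l big1 ?mul0r // => t _.
by rewrite Nentry hWd ?mulr0.
Qed.

Lemma Pit_diag p q : p != q -> Pit p q = 0.
Proof.
case: p q => [a r] [a' s] neq.
case: (eqVneq a a') => [ea|na]; last exact: Pit_diagL.
apply: Pit_diagR; apply: contra neq => /eqP ->; by rewrite ea.
Qed.

Lemma Pit_idem : opmul Pit Pit = Pit.
Proof. by rewrite /Pit opmulA -(opmulA (opadj chit)) chit_iso opmul1l. Qed.

Definition S (p : (IL * IR)%type) : bool := Pit p p == 1.

Lemma Pit_S p : Pit p p = (S p)%:R.
Proof.
have e : Pit p p * Pit p p = Pit p p.
  have := congr1 (fun M => M p p) Pit_idem; rewrite /= {1}/opmul.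
  rewrite (bigD1 p) //= big1 ?addr0 //.
  by move=> q nq; rewrite Pit_diag ?mul0r // eq_sym.
rewrite /S; case: eqP => [-> //|ne].
have : Pit p p * (Pit p p - 1) = 0 by rewrite mulrBr mulr1 e subrr.
move/eqP; rewrite mulf_eq0 => /orP [/eqP //|]; rewrite subr_eq0 => /eqP /ne [].
Qed.

Lemma Pit_eq p q : Pit p q = (p == q)%:R * (S p)%:R.
Proof.
case: (eqVneq p q) => [<-|nq]; first by rewrite mul1r Pit_S.
by rewrite Pit_diag // mul0r.
Qed.

Lemma Pit_chit : opmul Pit chit = chit.
Proof. by rewrite /Pit opmulA chit_iso opmul1r. Qed.

Lemma chit_S p h : ~~ S p -> chit p h = 0.
Proof.
move=> nS; rewrite -Pit_chit /opmul (sum_delta (i:=p)).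
  by rewrite Pit_S (negbTE nS) mul0r.
by move=> q nq; rewrite Pit_diag 1?eq_sym // mul0r.
Qed.

Lemma transfer A G : opmul A (opadj chi) = opmul (opadj chi) G ->
  opmul chi A = opmul G chi ->
  let Gt := opmul (opmul (opadj VW) G) VW in
  [/\ opmul chit A = opmul Gt chit, opmul A (opadj chit) = opmul (opadj chit) Gt,
      opmul (opmul chit A) (opadj chit) = opmul Gt Pit,
      opmul (opmul chit A) (opadj chit) = opmul Pit Gt &
      A = opmul (opmul (opadj chit) Gt) chit].
Proof.
move=> e1 e2 Gt.
have f1 : opmul chit A = opmul Gt chit.
  rewrite /chit /Gt opmulA e2 -!opmulA [X in _ = opmul X _](opmulA _ VW).
  by rewrite (proj2 VW_unit) opmul1r.
have f2 : opmul A (opadj chit) = opmul (opadj chit) Gt.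
  rewrite /chit /Gt opadj_mul opadjK -opmulA e1 !opmulA.
  by rewrite -[opmul VW (opmul (opadj VW) _)]opmulA (proj2 VW_unit) opmul1l.
split => //.
- by rewrite f1 /Pit opmulA.
- by rewrite opmulA f2 /Pit -opmulA.
- by rewrite -f2 opmulA chit_iso opmul1r.
Qed.

Lemma Gt_tensL At : opmul (opmul (opadj VW) (optens At idR)) VW =
  optens (opmul (opmul (opadj V) At) V) idR.
Proof.
by rewrite /VW opadj_tens !optens_mul opmul1r (proj1 hW).
Qed.

Lemma Gt_tensR Bt : opmul (opmul (opadj VW) (optens idL Bt)) VW =
  optens idL (opmul (opmul (opadj W) Bt) W).
Proof.
by rewrite /VW opadj_tens !optens_mul opmul1r (proj1 hV).
Qed.

Lemma commL X : opmul (optens X idR) Pit = opmul Pit (optens X idR) ->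
  forall a a' r, X a a' * (S (a', r))%:R = (S (a, r))%:R * X a a'.
Proof.
move=> e a a' r; have := congr1 (fun M => M (a, r) (a', r)) e.
rewrite /= tensL_l tensL_r (sum_delta (i:=a')); last first.
  by move=> b nb; rewrite Pit_diagL ?mulr0.
rewrite (sum_delta (i:=a)); last first.
  by move=> b nb; rewrite Pit_diagL ?mul0r // eq_sym.
by rewrite !Pit_S.
Qed.

Lemma commR Y : opmul (optens idL Y) Pit = opmul Pit (optens idL Y) ->
  forall a r s, Y r s * (S (a, s))%:R = (S (a, r))%:R * Y r s.
Proof.
move=> e a r s; have := congr1 (fun M => M (a, r) (a, s)) e.
rewrite /= tensR_l tensR_r (sum_delta (i:=s)); last first.
  by move=> b nb; rewrite Pit_diagR ?mulr0.
rewrite (sum_delta (i:=r)); last first.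
  by move=> b nb; rewrite Pit_diagR ?mul0r // eq_sym.
by rewrite !Pit_S.
Qed.

Definition RS a : {set IR} := [set r | S (a, r)].

Lemma blockL X : opmul (optens X idR) Pit = opmul Pit (optens X idR) ->
  forall a a', RS a != RS a' -> X a a' = 0.
Proof.
move=> e a a' ne.
have [r hr] : exists r, S (a, r) != S (a', r).
  apply/existsP; apply: contraR ne => /existsPn h.
  by apply/eqP/setP => r; rewrite !inE; move/negPn: (h r) => /eqP.
have := commL e a a' r.
by case: (S (a, r)) (S (a', r)) hr => [] [] //= _; rewrite ?mulr1 ?mulr0 ?mul1r ?mul0r // => /eqP; rewrite eq_sym => /eqP.
Qed.

Lemma Pit_mul_l (M : op R (IL * IR)%type (IL * IR)%type) p q :
  opmul Pit M p q = (S p)%:R * M p q.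
Proof.
rewrite /opmul (bigD1 p) //= big1 ?addr0 ?Pit_S // => c nc.
by rewrite Pit_diag ?mul0r // eq_sym.
Qed.

Lemma Pit_mul_r (M : op R (IL * IR)%type (IL * IR)%type) p q :
  opmul M Pit p q = M p q * (S q)%:R.
Proof.
rewrite /opmul (bigD1 q) //= big1 ?addr0 ?Pit_S // => c nc.
by rewrite Pit_diag ?mulr0.
Qed.

Lemma sandwich (M N : op R (IL * IR)%type (IL * IR)%type) :
  opmul (opmul (opmul (opadj chit) M) chit) (opmul (opmul (opadj chit) N) chit) =
  opmul (opmul (opadj chit) (opmul (opmul M Pit) N)) chit.
Proof. by rewrite /Pit !opmulA. Qed.

Lemma propP_sub : balanced chi -> forall a a' r r',
  S (a, r) -> S (a', r) -> S (a, r') -> S (a', r').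
Proof.
move=> hb a a' r r' h1 h2 h3; apply/negPn/negP => h4.
pose Pblk : op R IL IL := fun b b' => (b == b')%:R * (RS b == RS a)%:R.
pose E : op R IR IR := fun t u => (t == r)%:R * (u == r')%:R.
pose Zt := optens Pblk E.
pose Z := opmul (opmul (opadj chit) Zt) chit.
have ZS p q : Zt p q != 0 -> S p && S q.
  case: p q => [b t] [b' u]; rewrite /Zt /optens /Pblk /E /=.
  case: (eqVneq b b') => [<-|]; last by rewrite !mul0r eqxx.
  case: (eqVneq t r) => [->|]; last by rewrite mul0r mulr0 eqxx.
  case: (eqVneq u r') => [->|]; last by rewrite !mulr0 eqxx.
  case: (eqVneq (RS b) (RS a)) => [eb|]; last by rewrite mulr0 mul0r eqxx.
  by move=> _; rewrite -!(in_set (fun x => S (b, x))) -/(RS b) eb !inE h1 h3.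
have hPZ : opmul Pit Zt = Zt.
  apply: opext => p q; rewrite Pit_mul_l.
  case: (eqVneq (Zt p q) 0) => [->|/ZS /andP [-> _]]; by rewrite ?mulr0 ?mul1r.
have hZP : opmul Zt Pit = Zt.
  apply: opext => p q; rewrite Pit_mul_r.
  case: (eqVneq (Zt p q) 0) => [->|/ZS /andP [_ ->]]; by rewrite ?mul0r ?mulr1.
have hcomm : commutant (stlocL chi) Z.
  move=> A [At [e1 e2]].
  have [f1 f2 f3 f4 f5] := transfer e1 e2; rewrite Gt_tensL in f1 f2 f3 f4 f5.
  set Xt := opmul (opmul (opadj V) At) V in f1 f2 f3 f4 f5.
  have bl := blockL (etrans (esym f3) f4).
  have cXZ : opmul (optens Xt idR) Zt = opmul Zt (optens Xt idR).
    rewrite /Zt !optens_mul opmul1l opmul1r; congr optens.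
    apply: opext => b b'; rewrite /opmul.
    rewrite (bigD1 b') //= big1 ?addr0; last first.
      by move=> c nc; rewrite /Pblk (negbTE nc) mul0r mulr0.
    rewrite (bigD1 b) //= big1 ?addr0; last first.
      by move=> c nc; rewrite /Pblk eq_sym (negbTE nc) !mul0r.
    rewrite /Pblk !eqxx !mul1r.
    case: (eqVneq (RS b) (RS b')) => [->|nb]; first by rewrite mulrC.
    by rewrite bl // mul0r mulr0.
  by rewrite f5 /Z !sandwich (opmulA (optens Xt idR)) hPZ hZP cXZ.
have [Bt [e1 e2]] := (hb Z).2 hcomm.
have [g1 g2 g3 g4 g5] := transfer e1 e2; rewrite Gt_tensR in g1 g2 g3 g4 g5.
set Yt := opmul (opmul (opadj W) Bt) W in g1 g2 g3 g4 g5.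
have hZ : opmul (opmul chit Z) (opadj chit) = Zt.
  have -> : opmul (opmul chit Z) (opadj chit) = opmul (opmul Pit Zt) Pit.
    by rewrite /Z /Pit !opmulA.
  by rewrite hPZ hZP.
rewrite hZ in g3 g4.
have := commR (etrans (esym g3) g4) a' r r'.
rewrite (negbTE h4) h2 mulr0 mul1r => /esym Y0.
have := congr1 (fun M => M (a, r) (a, r')) g3.
rewrite /= tensR_l (bigD1 r') //= big1 ?addr0; last first.
  by move=> t nt; rewrite Pit_diagR ?mulr0.
rewrite Y0 mul0r /Zt /optens /Pblk /E /= !eqxx !mul1r => /eqP.
by rewrite oner_eq0.
Qed.

Hypothesis hb : balanced chi.

Lemma propP a a' r : S (a, r) -> S (a', r) -> RS a = RS a'.
Proof.
move=> h1 h2; apply/setP => r'; rewrite !inE.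
by apply/idP/idP => h; [apply: (propP_sub hb h1 h2 h) | apply: (propP_sub hb h2 h1 h)].
Qed.

Definition JLp a : bool := RS a != set0.
Definition JL : finType := {a : IL | JLp a}.
Definition JRp r : bool := [exists a, S (a, r)].
Definition JR : finType := {r : IR | JRp r}.
Definition kpred (k : {set IR}) : bool := [exists a, RS a == k] && (k != set0).
Definition K : finType := {k : {set IR} | kpred k}.

Lemma kpredL (j : JL) : kpred (RS (val j)).
Proof. by rewrite /kpred; apply/andP; split; [apply/existsP; exists (val j) | exact: (valP j)]. Qed.

Definition fL (j : JL) : K := exist _ (RS (val j)) (kpredL j).

Definition rep (r : JR) : IL := xchoose (existsP (valP r)).
Lemma rep_S (r : JR) : S (rep r, val r).
Proof. exact: (xchooseP (existsP (valP r))). Qed.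

Lemma kpredR (r : JR) : kpred (RS (rep r)).
Proof.
rewrite /kpred; apply/andP; split; first by apply/existsP; exists (rep r).
by apply/set0Pn; exists (val r); rewrite inE rep_S.
Qed.

Definition fR (r : JR) : K := exist _ (RS (rep r)) (kpredR r).

Lemma blk_iff (j : JL) (k : JR) : (fL j == fR k) = S (val j, val k).
Proof.
apply/idP/idP => [/eqP /(congr1 val) /= e|h].
  have : val k \in RS (rep k) by rewrite inE rep_S.
  by rewrite -e inE.
by apply/eqP; apply: val_inj => /=; apply: propP h (rep_S k).
Qed.

Definition pb (b : blk fL fR) : (IL * IR)%type := (val (val b).1, val (val b).2).

Lemma pb_S b : S (pb b).
Proof. by rewrite /pb -blk_iff; exact: (valP b). Qed.

Lemma pb_inj : injective pb.
Proof.
move=> [[j k] h1] [[j' k'] h2] [/= e1 e2]; apply: val_inj => /=.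
by congr pair; apply: val_inj.
Qed.

Definition U : op R (blk fL fR) IH := fun b h => chit (pb b) h.
Definition zeta := opmul (@incl R K JL JR fL fR) U.

Lemma zeta_eq p h : zeta p h = chit (val p.1, val p.2) h.
Proof.
rewrite /zeta /opmul /incl; case: (boolP (blk_pred fL fR p)) => hp.
  rewrite (bigD1 (exist _ p hp)) //= eqxx mul1r big1 ?addr0 //.
  move=> b nb; case: eqP => [e|]; last by rewrite mul0r.
  by case/eqP: nb; apply: val_inj.
rewrite big1; last first.
  move=> b _; case: eqP => [e|]; last by rewrite mul0r.
  by case/negP: hp; rewrite e; exact: (valP b).
by rewrite chit_S // -blk_iff.
Qed.

Definition UL : op R IL JL := fun a j => V a (val j).
Definition UR : op R IR JR := fun r k => W r (val k).

Lemma UL_iso : is_isometry UL.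
Proof.
apply: opext => j j'; rewrite /opmul /opadj /UL /opid.
have := congr1 (fun M => M (val j) (val j')) (proj1 hV); rewrite /opmul /opadj /opid /= => ->.
by rewrite (inj_eq val_inj).
Qed.

Lemma UR_iso : is_isometry UR.
Proof.
apply: opext => j j'; rewrite /opmul /opadj /UR /opid.
have := congr1 (fun M => M (val j) (val j')) (proj1 hW); rewrite /opmul /opadj /opid /= => ->.
by rewrite (inj_eq val_inj).
Qed.

Lemma chit_JL a t h : ~~ JLp a -> chit (a, t) h = 0.
Proof.
rewrite /JLp negbK => /eqP e; apply: chit_S.
apply/negP => hs; have : t \in RS a by rewrite inE.
by rewrite e inE.
Qed.

Lemma chit_JR a t h : ~~ JRp t -> chit (a, t) h = 0.
Proof.
move=> /existsPn e; apply: chit_S; exact: e.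
Qed.

Lemma sum_JLJR (F : IL -> IR -> C) :
  (forall a t, ~~ S (a, t) -> F a t = 0) ->
  \sum_(q : (JL * JR)%type) F (val q.1) (val q.2) = \sum_(p : (IL * IR)%type) F p.1 p.2.
Proof.
move=> hF; rewrite sum_pair [RHS]sum_pair.
rewrite (sum_sig_full (P := JLp) (F := fun a => \sum_(k : JR) F a (val k))).
  apply: eq_bigr => a _.
  rewrite (sum_sig_full (P := JRp) (F := fun t => F a t)) //.
  by move=> t /existsPn e; apply: hF; exact: e.
move=> a; rewrite /JLp negbK => /eqP e; apply: big1 => k _; apply: hF.
apply/negP => hs; have : val k \in RS a by rewrite inE.
by rewrite e inE.
Qed.

Lemma chi_factor : chi = opmul (optens UL UR) zeta.
Proof.
apply: opext => [[a r] h].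
transitivity (opmul VW chit (a, r) h); first by rewrite -chi_eq.
rewrite /opmul.
transitivity (\sum_(p : (IL * IR)%type) optens V W (a, r) (p.1, p.2) * chit (p.1, p.2) h).
  by apply: eq_bigr => [[b t]].
rewrite -(sum_JLJR (F := fun b t => optens V W (a, r) (b, t) * chit (b, t) h)).
  apply: eq_bigr => q _; by rewrite zeta_eq.
by move=> b t ns; rewrite chit_S ?mulr0.
Qed.

Lemma sum_blk (G : (JL * JR)%type -> C) :
  (forall q, ~~ blk_pred fL fR q -> G q = 0) ->
  \sum_(b : blk fL fR) G (val b) = \sum_(q : (JL * JR)%type) G q.
Proof. move=> h; exact: (sum_sig_full (P := blk_pred fL fR) h). Qed.

Lemma U_unitary : Defs.is_unitary U.
Proof.
split.
  apply: opext => h h'; rewrite -(congr1 (fun M => M h h') chit_iso) /opmul /opadj /U /pb.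
  rewrite (sum_blk (G := fun q => (chit (val q.1, val q.2) h)^* * chit (val q.1, val q.2) h')).
    rewrite (sum_JLJR (F := fun b t => (chit (b, t) h)^* * chit (b, t) h')).
      by apply: eq_bigr => [[b t]].
    by move=> b t ns; rewrite chit_S ?conjC0 ?mul0r.
  by move=> [j k] nb; rewrite chit_S ?conjC0 ?mul0r // -blk_iff.
apply: opext => b b'.
have -> : opmul U (opadj U) b b' = Pit (pb b) (pb b') by [].
by rewrite Pit_eq (inj_eq pb_inj) pb_S mulr1.
Qed.

Lemma nondeg : nondeg_blocks fL fR.
Proof.
move=> [s hs]; have /andP [/existsP [a /eqP ea] ns] := hs.
have ja : JLp a by rewrite /JLp ea.
split.
  by exists (exist _ a ja); apply: val_inj => /=.
have [r hr] := set0Pn _ ns.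
have sar : S (a, r) by move: hr; rewrite -ea inE.
have jr : JRp r by apply/existsP; exists a.
exists (exist _ r jr); apply: val_inj => /=.
rewrite -ea; apply: propP (rep_S _) _; exact: sar.
Qed.

Lemma UaU A At : opmul A (opadj chi) = opmul (opadj chi) (optens At idR) ->
  opmul chi A = opmul (optens At idR) chi ->
  opmul (opmul U A) (opadj U) =
  blk_tens_id (fun j j' : JL => opmul (opmul (opadj V) At) V (val j) (val j')).
Proof.
move=> e1 e2; have [f1 f2 f3 f4 f5] := transfer e1 e2; rewrite Gt_tensL in f3.
apply: opext => b b'.
have -> : opmul (opmul U A) (opadj U) b b' = opmul (opmul chit A) (opadj chit) (pb b) (pb b') by [].
rewrite f3 /pb tensL_l (bigD1 (val (val b').1)) //= big1 ?addr0; last first.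
  by move=> c nc; rewrite Pit_diagL ?mulr0.
rewrite /blk_tens_id; congr (_ * _).
case: (eqVneq (val (val b).2) (val (val b').2)) => [e|ne].
  rewrite e Pit_S (_ : S _ = true); last exact: (pb_S b').
  by rewrite (_ : (val b).2 == (val b').2); last by apply/eqP; apply: val_inj.
rewrite Pit_diagR // (_ : (val b).2 == (val b').2 = false) //.
by apply: negbTE; apply: contra ne => /eqP ->.
Qed.

Lemma rep_unitary : representation_unitary (stlocL chi) U.
Proof.
split; first exact: nondeg.
split; first exact: U_unitary.
move=> Y; split.
  move=> [A [[At [e1 e2]] ->]].
  exists (fun j j' : JL => opmul (opmul (opadj V) At) V (val j) (val j')); split; last exact: UaU.
  have [f1 f2 f3 f4 f5] := transfer e1 e2; rewrite Gt_tensL in f3 f4.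
  have bl := blockL (etrans (esym f3) f4).
  move=> j j' ne; apply: bl; apply: contra ne => /eqP e.
  by apply/eqP; apply: val_inj.
move=> [X [hX ->]].
pose Xt : op R IL IL := fun a a' =>
  match insub a, insub a' with Some j, Some j' => X j j' | _, _ => 0 end.
pose At := opmul (opmul V Xt) (opadj V).
pose G := optens At idR.
have hXt : opmul (opmul (opadj V) At) V = Xt.
  by rewrite /At !opmulA (proj1 hV) opmul1r -opmulA (proj1 hV) opmul1l.
have cX : opmul (optens Xt idR) Pit = opmul Pit (optens Xt idR).
  apply: opext => [[a r] [a' s]]; rewrite Pit_mul_l Pit_mul_r /optens /opid /=.
  case: (eqVneq r s) => [<-|ne]; last by rewrite !mulr0 ?mul0r.
  rewrite !mulr1.
  rewrite /Xt; case: insubP => [j hj ej|hj]; last by rewrite mul0r mulr0.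
  case: insubP => [j' hj' ej'|hj']; last by rewrite mul0r mulr0.
  case: (eqVneq (fL j) (fL j')) => [e|ne]; last by rewrite hX // mul0r mulr0.
  have := congr1 val e => /= e'.
  rewrite -ej -ej'.
  have : (r \in RS (val j)) = (r \in RS (val j')) by rewrite e'.
  by rewrite !inE => ->; rewrite mulrC.
have hG : G = opmul (opmul VW (optens Xt idR)) (opadj VW).
  rewrite -hXt -Gt_tensL !opmulA (proj2 VW_unit) opmul1r.
  by rewrite -!opmulA (proj2 VW_unit) opmul1l.
have hpi : proj_chi chi = opmul (opmul VW Pit) (opadj VW).
  rewrite Pit_eq2 !opmulA (proj2 VW_unit) opmul1r.
  by rewrite -!opmulA (proj2 VW_unit) opmul1l.
have cG : opmul G (proj_chi chi) = opmul (proj_chi chi) G.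
  have cv M N : opmul (opmul (opmul VW M) (opadj VW)) (opmul (opmul VW N) (opadj VW)) =
      opmul (opmul VW (opmul M N)) (opadj VW).
    rewrite !opmulA -[opmul (opadj VW) (opmul VW _)]opmulA (proj1 VW_unit) opmul1l ?opmulA.
    by [].

  by rewrite hG hpi !cv cX.
have pchi : opmul (proj_chi chi) chi = chi.
  by rewrite /proj_chi opmulA hiso opmul1r.
have chip : opmul (opadj chi) (proj_chi chi) = opadj chi.
  by rewrite /proj_chi -opmulA hiso opmul1l.
exists (opmul (opmul (opadj chi) G) chi); split.
  exists At; split.
    by rewrite opmulA -/(proj_chi chi) opmulA cG -opmulA chip.
  by rewrite -!opmulA -/(proj_chi chi) -cG opmulA pchi.
rewrite (UaU (At := At)).
- congr blk_tens_id; apply: opext => j j'.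
  by rewrite hXt /Xt !valK.
- by rewrite opmulA -/(proj_chi chi) opmulA cG -opmulA chip.
- by rewrite -!opmulA -/(proj_chi chi) -cG opmulA pchi.
Qed.

Lemma main_result : exists (JL JR : finType) (zeta : op R (JL * JR)%type IH)
         (UL : op R IL JL) (UR : op R IR JR),
    canonical_splitting_map (stlocL chi) zeta /\
    is_isometry UL /\ is_isometry UR /\
    chi = opmul (optens UL UR) zeta.
Proof.
exists JL, JR, zeta, UL, UR; split.
  by exists K, fL, fR, U; split; [exact: rep_unitary|].
split; first exact: UL_iso.
split; first exact: UR_iso.
exact: chi_factor.
Qed.

End Main.

Theorem mainTheorem16 (R : realType) (IH IL IR : finType)
    (chi : op R (IL * IR)%type IH) :
  splitting_map chi -> lean chi ->
  exists (JL JR : finType) (zeta : op R (JL * JR)%type IH)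
         (UL : op R IL JL) (UR : op R IR JR),
    canonical_splitting_map (stlocL chi) zeta /\
    is_isometry UL /\ is_isometry UR /\
    chi = opmul (optens UL UR) zeta.
Proof.
move=> hiso hlean.
have [V [hV hVd]] := exists_V hlean.
have [W [hW hWd]] := exists_W hlean.
case: hlean => hb _ _.
exact: (main_result hiso hV hW hVd hWd hb).
Qed.
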